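(* For every $n\geq 2$ there exists a finitely generated subgroup $H\leqslant F_n\times F_n$ such that $\mathrm{Ord}_H(F_n\times F_n)=\mathbb{N}$. In particular, $F_n\times F_n$ does not have bounded subgroup spectra.
   Context: $F_n$ is the free group of rank $n$; $\mathbb{N}$ contains $0$. For a group $G$, a subset $S\subseteq G$ and $g\in G$, $\mathrm{Ord}_S(g)=\min\{k\geq 1: g^k\in S\}$ if such $k$ exists and $0$ otherwise; $\mathrm{Ord}_S(G)=\{\mathrm{Ord}_S(g):g\in G\}$. A group has bounded subgroup spectra if $\mathrm{Ord}_H(G)$ is bounded for every finitely generated $H\leqslant G$. *)

(* Defs.v *)
(* Concrete model of the free group F_n as freely reduced
   words over the alphabet 'I_n x bool (bool = "inverse letter"). *)
From mathcomp Require Import all_boot.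
Set Implicit Arguments. Unset Strict Implicit. Unset Printing Implicit Defensive.

Section FreeGroup.
Variable n : nat.

(* a letter (i, false) is the generator x_i, (i, true) is x_i^{-1} *)
Definition letter := ('I_n * bool)%type.
Definition word := seq letter.

Definition linv (x : letter) : letter := (x.1, ~~ x.2).

Definition push (x : letter) (w : word) : word :=
  match w with
  | y :: w' => if y == linv x then w' else x :: w
  | [::] => [:: x]
  end.

Definition reduce (w : word) : word := foldr push [::] w.

Definition reduced (w : word) : bool := sorted (fun x y => y != linv x) w.

Definition fg_one : word := [::].
Definition fg_mul (u v : word) : word := reduce (u ++ v).
Definition fg_inv (u : word) : word := rev (map linv u).

End FreeGroup.

(* the direct product F_n x F_n; elements are pairs of words,
   canonically represented by pairs of reduced words *)
Definition FF (n : nat) := (word n * word n)%type.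
Definition ff_one n : FF n := (fg_one n, fg_one n).
Definition ff_mul n (g h : FF n) : FF n := (fg_mul g.1 h.1, fg_mul g.2 h.2).
Definition ff_inv n (g : FF n) : FF n := (fg_inv g.1, fg_inv g.2).
Definition ff_red n (g : FF n) : FF n := (reduce g.1, reduce g.2).
Definition ff_pow n (g : FF n) (k : nat) : FF n :=
  iter k (ff_mul g) (ff_one n).

(* the subgroup <S> of F_n x F_n generated by the finite list S,
   as a set of canonical (reduced) representatives *)
Inductive gen_sub n (S : seq (FF n)) : FF n -> Prop :=
| gen_one : gen_sub S (ff_one n)
| gen_gen s : s \in S -> gen_sub S (ff_red s)
| gen_inv g : gen_sub S g -> gen_sub S (ff_inv g)
| gen_mul g h : gen_sub S g -> gen_sub S h -> gen_sub S (ff_mul g h).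

Definition in_H n (S : seq (FF n)) (g : FF n) : Prop := gen_sub S (ff_red g).

(* Ord_H(g) = m, written out: m is the least k >= 1 with g^k in H,
   or m = 0 if no such k exists *)
Definition is_Ord n (S : seq (FF n)) (g : FF n) (m : nat) : Prop :=
  (0 < m /\ in_H S (ff_pow g m) /\ forall k, 0 < k < m -> ~ in_H S (ff_pow g k))
  \/ (m = 0 /\ forall k, 0 < k -> ~ in_H S (ff_pow g k)).

Definition Ord_spectrum_full n (S : seq (FF n)) : Prop :=
  forall m : nat, exists g : FF n, is_Ord S g m.

Definition bounded_subgroup_spectra_FF (n : nat) : Prop :=
  forall S : seq (FF n), exists B : nat,
    forall (g : FF n) (m : nat), is_Ord S g m -> m <= B.

(* Main.v *)
Require Import Defs.
From Stdlib Require Import ZArith Lia FunctionalExtensionality PropExtensionality ProofIrrelevance IndefiniteDescription.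
From mathcomp Require Import all_boot.
From mathcomp Require Import zify.
Set Implicit Arguments. Unset Strict Implicit. Unset Printing Implicit Defensive.

Section FG.
Variable n : nat.
Implicit Types (x y : letter n) (u v w r : word n).

Lemma linvK x : linv (linv x) = x.
Proof. by case: x => i b; rewrite /linv /= negbK. Qed.

Lemma linv_eq x y : (linv x == y) = (x == linv y).
Proof. by apply/eqP/eqP => [<-|->]; rewrite linvK. Qed.

Lemma reduced_cons x w : reduced (x :: w) -> reduced w.
Proof. exact: path_sorted. Qed.

Lemma push_cancel x w : reduced w -> push x (push (linv x) w) = w.
Proof.
case: w => [|y w] /=; first by rewrite eqxx.
case: ifP => [/eqP Hy | Hne] Hr.
  have {}Hy : y = x by rewrite Hy linvK.
  subst y; case: w Hr => [|z w] //= /andP [Hz _].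
  by rewrite (negbTE Hz).
by rewrite /= eqxx.
Qed.

Lemma reduced_push x w : reduced w -> reduced (push x w).
Proof.
case: w => [|y w] //= Hr.
case: ifP => [_|Hne]; first exact: (path_sorted Hr).
by rewrite /= Hne.
Qed.

Lemma reduced_foldr r w : reduced r -> reduced (foldr (@push n) r w).
Proof. by move=> Hr; elim: w => [|x w IH] //=; apply: reduced_push. Qed.

Lemma reduced_reduce w : reduced (reduce w).
Proof. exact: reduced_foldr. Qed.

Lemma reduce_id w : reduced w -> reduce w = w.
Proof.
elim: w => [|x w IH] // Hr.
rewrite /reduce /= -/(reduce w) IH; last exact: reduced_cons Hr.
case: w Hr {IH} => [|y w] //= /andP [Hy _].
by rewrite (negbTE Hy).
Qed.

Lemma reduce_idem w : reduce (reduce w) = reduce w.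
Proof. exact/reduce_id/reduced_reduce. Qed.

Lemma foldr_push_push x w r : reduced w -> reduced r ->
  foldr (@push n) r (push x w) = push x (foldr (@push n) r w).
Proof.
case: w => [|y w] //= Hw Hr.
case: ifP => [/eqP Hy|//].
subst y. by rewrite push_cancel //; apply: reduced_foldr.
Qed.

Lemma foldr_push_reduce u r : reduced r ->
  foldr (@push n) r (reduce u) = foldr (@push n) r u.
Proof.
move=> Hr; elim: u => [|x u IH] //=.
rewrite /reduce /= -/(reduce u) foldr_push_push //; first by rewrite IH.
exact: reduced_reduce.
Qed.

Lemma reduce_cat u v : reduce (u ++ v) = foldr (@push n) (reduce v) u.
Proof. by rewrite /reduce foldr_cat. Qed.

Lemma reduce_catL u v : reduce (reduce u ++ v) = reduce (u ++ v).
Proof. by rewrite !reduce_cat foldr_push_reduce //; apply: reduced_reduce. Qed.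

Lemma reduce_catR u v : reduce (u ++ reduce v) = reduce (u ++ v).
Proof. by rewrite !reduce_cat reduce_idem. Qed.

Lemma fg_inv_cat u v : fg_inv (u ++ v) = fg_inv v ++ fg_inv u.
Proof. by rewrite /fg_inv map_cat rev_cat. Qed.

Lemma fg_invK u : fg_inv (fg_inv u) = u.
Proof.
rewrite /fg_inv map_rev revK -map_comp.
by rewrite -[RHS]map_id; apply: eq_map => x /=; rewrite linvK.
Qed.

Lemma fg_inv_cons x u : fg_inv (x :: u) = fg_inv u ++ [:: linv x].
Proof. by rewrite -cat1s fg_inv_cat. Qed.

Lemma reduce_inv_r u : reduce (u ++ fg_inv u) = [::].
Proof.
elim: u => [|x u IH] //.
rewrite fg_inv_cons cat_cons catA /reduce /= -/(reduce _).
rewrite -reduce_catL IH /= /reduce /=.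
by rewrite eqxx.
Qed.

Lemma reduce_inv_l u : reduce (fg_inv u ++ u) = [::].
Proof. by rewrite -{2}(fg_invK u) reduce_inv_r. Qed.

Lemma reduced_inv w : reduced w -> reduced (fg_inv w).
Proof.
rewrite /reduced /fg_inv rev_sorted sorted_map => H.
apply: sub_sorted H => x y /=.
by rewrite linvK eq_sym linv_eq.
Qed.

Lemma reduce_inv u : reduce (fg_inv u) = fg_inv (reduce u).
Proof.
have E : reduce (fg_inv u) = reduce (fg_inv (reduce u)).
  have H : reduce (u ++ fg_inv (reduce u)) = [::].
    by rewrite -reduce_catL reduce_inv_r.
  rewrite -{1}[fg_inv u]cats0 -H reduce_catR catA -reduce_catL reduce_inv_l.
  by [].
rewrite E reduce_id //; apply/reduced_inv/reduced_reduce.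
Qed.

End FG.

Section Grp.
Variable G : Type.
Variables (mul : G -> G -> G) (inv : G -> G) (one : G).
Local Notation "x * y" := (mul x y).
Hypothesis mulA : forall x y z, x * (y * z) = (x * y) * z.
Hypothesis mul1g : forall x, one * x = x.
Hypothesis mulg1 : forall x, x * one = x.
Hypothesis mulVg : forall x, inv x * x = one.
Hypothesis mulgV : forall x, x * inv x = one.

Definition gpow x k := iter k (mul x) one.

Lemma gpowS x k : gpow x k.+1 = x * gpow x k. Proof. by []. Qed.
Lemma gpowSr x k : gpow x k.+1 = gpow x k * x.
Proof.
elim: k => [|k IH]; first by rewrite /gpow /= mulg1 mul1g.
by rewrite [LHS]gpowS [in LHS]IH mulA.
Qed.

Lemma mulKg x y : inv x * (x * y) = y. Proof. by rewrite mulA mulVg mul1g. Qed.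
Lemma mulKVg x y : x * (inv x * y) = y. Proof. by rewrite mulA mulgV mul1g. Qed.
Lemma mulgK x y : (y * x) * inv x = y. Proof. by rewrite -mulA mulgV mulg1. Qed.
Lemma mulgKV x y : (y * inv x) * x = y. Proof. by rewrite -mulA mulVg mulg1. Qed.

Lemma inv_uniq x z : x * z = one -> z = inv x.
Proof. by move=> H; rewrite -(mulKg x z) H mulg1. Qed.
Lemma invK x : inv (inv x) = x.
Proof. by symmetry; apply: inv_uniq; rewrite mulVg. Qed.
Lemma invM x y : inv (x * y) = inv y * inv x.
Proof.
symmetry; apply: inv_uniq.
by rewrite -mulA (mulA y) mulgV mul1g mulgV.
Qed.
Lemma inv1 : inv one = one.
Proof. by symmetry; apply: inv_uniq; rewrite mulg1. Qed.

Lemma gpow_conj g x k :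
  gpow (inv g * x * g) k = inv g * gpow x k * g.
Proof.
elim: k => [|k IH]; first by rewrite /gpow /= mulg1 mulVg.
rewrite gpowS IH.
by rewrite !mulA mulgK -!mulA.
Qed.

Definition commute a b := a * b = b * a.

Lemma commute_inv a b : commute a b -> commute a (inv b).
Proof.
rewrite /commute => H.
by rewrite -{1}(mulKg b a) -H mulA mulgK.
Qed.

Lemma commute_mul a b c : commute a b -> commute a c -> commute a (b * c).
Proof. by rewrite /commute => H1 H2; rewrite mulA H1 -mulA H2 mulA. Qed.

Lemma conj_mul g a b : (inv g * a * g) * (inv g * b * g) = inv g * (a * b) * g.
Proof. by rewrite !mulA mulgK. Qed.

Lemma commute_conj g a b : commute a b -> commute (inv g * a * g) (inv g * b * g).
Proof. by rewrite /commute => H; rewrite !conj_mul H. Qed.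

Lemma commute_conj2 a b c : commute a c -> commute a b -> commute a (inv c * b * c).
Proof.
move=> Hc Hb; apply: commute_mul; last by [].
by apply: commute_mul => //; apply: commute_inv.
Qed.

Variables X0 X1 s : G.
Definition tt j := gpow (inv X0) j * s * gpow X0 j.
Definition yy := inv X0 * X1.
Definition zz := gpow (inv X0) 2 * X1 * gpow X0 2.

Hypothesis R1 : commute yy zz.
Hypothesis R2 : commute yy (tt 2).
Hypothesis R3 : commute yy (tt 3).
Hypothesis R4 : commute s zz.
Hypothesis R5 : commute s (tt 2).
Hypothesis R6 : commute s (tt 3).
Hypothesis R7 : gpow (s * tt 1) 3 = one.
Hypothesis R8 : s * s = one.

Lemma gpow_inv x k : gpow (inv x) k = inv (gpow x k).
Proof.
elim: k => [|k IH]; first by rewrite inv1.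
by rewrite gpowS gpowSr invM IH.
Qed.

Lemma tt_shift j : inv X0 * tt j * X0 = tt j.+1.
Proof. by rewrite /tt [gpow (inv X0) j.+1]gpowS (gpowSr X0) !mulA. Qed.

Lemma tt_conj i j : inv (gpow X0 i) * tt j * gpow X0 i = tt (i + j).
Proof.
elim: i => [|i IH]; first by rewrite /gpow /= inv1 mul1g mulg1.
rewrite gpowSr invM addSn -tt_shift -IH.
by rewrite !mulA.
Qed.

Lemma tt_unshift j : X0 * tt j.+1 * inv X0 = tt j.
Proof. by rewrite -tt_shift !mulA mulgV mul1g mulgK. Qed.

Lemma zz_eq : zz = inv X0 * yy * gpow X0 2.
Proof.
rewrite /zz /yy /gpow /=.
by rewrite !mulg1 !mulA.
Qed.

Lemma inv_zz : inv zz = inv (gpow X0 2) * inv yy * X0.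
Proof. by rewrite zz_eq !invM invK !mulA. Qed.

Lemma zz_shift j : commute yy (tt j) -> inv zz * tt j.+1 * zz = tt j.+2.
Proof.
move=> H.
have E : inv yy * tt j * yy = tt j.
  by rewrite -mulA -H mulKg.
rewrite inv_zz zz_eq.
have -> : inv (gpow X0 2) * inv yy * X0 * tt j.+1 * (inv X0 * yy * gpow X0 2)
        = inv (gpow X0 2) * (inv yy * (X0 * tt j.+1 * inv X0) * yy) * gpow X0 2.
  by rewrite !mulA.
by rewrite tt_unshift E tt_conj.
Qed.

Lemma P_all j : 2 <= j -> commute yy (tt j).
Proof.
suff H : forall k, commute yy (tt k.+2) /\ commute yy (tt k.+3).
  case: j => [|[|j]] // _; exact: (H j).1.
elim=> [|k [IH1 IH2]]; first by split.
split => //.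
rewrite -zz_shift //.
by apply: commute_conj2 => //.
Qed.

Lemma Q_all j : 2 <= j -> commute s (tt j).
Proof.
suff H : forall k, commute s (tt k.+2) /\ commute s (tt k.+3).
  case: j => [|[|j]] // _; exact: (H j).1.
elim=> [|k [IH1 IH2]]; first by split.
split => //.
rewrite -zz_shift; last by apply: P_all.
by apply: commute_conj2.
Qed.

Lemma tt_conj0 i : tt i = inv (gpow X0 i) * s * gpow X0 i.
Proof. by rewrite /tt gpow_inv. Qed.

Opaque tt.

Lemma tt_far i j : i.+2 <= j -> commute (tt i) (tt j).
Proof.
move=> H.
have -> : j = i + (j - i) by rewrite subnKC // ltnW // ltnW.
rewrite -tt_conj [tt i]tt_conj0.
apply: commute_conj; apply: Q_all.
lia.
Qed.

Lemma tt_inv i : tt i * tt i = one.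
Proof.
rewrite tt_conj0.
set g := gpow X0 i.
by rewrite -!mulA (mulA g) mulgV mul1g (mulA s) R8 mul1g mulVg.
Qed.

Lemma braid_of a b : a * a = one -> b * b = one -> gpow (a * b) 3 = one ->
  a * b * a = b * a * b.
Proof.
move=> Ha Hb; rewrite /gpow /= mulg1 => H.
have H1 : a * b * a * (b * a * b) = one by move: H; rewrite !mulA.
have E := inv_uniq H1.
have Ia : inv a = a by symmetry; apply: inv_uniq.
have Ib : inv b = b by symmetry; apply: inv_uniq.
rewrite !invM Ia Ib in E.
by rewrite E mulA.
Qed.

Lemma tt_braid i : tt i * tt i.+1 * tt i = tt i.+1 * tt i * tt i.+1.
Proof.
apply: braid_of; try exact: tt_inv.
rewrite -addn1 -tt_conj [tt i]tt_conj0.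
set g := gpow X0 i.
have -> : inv g * s * g * (inv g * tt 1 * g) = inv g * (s * tt 1) * g.
  by rewrite -!mulA (mulA g) mulgV mul1g !mulA.
by rewrite gpow_conj R7 mulg1 mulVg.
Qed.

Fixpoint cxl a L := if L is L'.+1 then tt a * cxl a.+1 L' else one.

Lemma comm_far_cxl k b L : k.+2 <= b -> commute (tt k) (cxl b L).
Proof.
elim: L b => [|L IH] b Hb /=; first by rewrite /commute mulg1 mul1g.
apply: commute_mul; first exact: tt_far.
by apply: IH; apply: leqW.
Qed.

Lemma cxl_shift L a i : a <= i < a + L -> cxl a L.+1 * tt i = tt i.+1 * cxl a L.+1.
Proof.
elim: L a i => [|L IH] a i; first by rewrite addn0 => /andP [H1 H2]; move: (leq_ltn_trans H1 H2); rewrite ltnn.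
move=> /andP [H1 H2].
rewrite [cxl a L.+2]/=.
case: (ltngtP a i) H1 => // [Hlt|Heq] _.
  rewrite -mulA IH; last by rewrite Hlt /= addSnnS.
  by rewrite mulA (tt_far (i:=a) (j:=i.+1)) // -mulA.
subst i.
have Hc := comm_far_cxl L (k:=a) (b:=a.+2) (leqnn _).
have Hb := tt_braid a.
move: (tt a) (tt a.+1) (cxl a.+2 L) Hc Hb => A B C Hc Hb.
rewrite /commute in Hc.
by rewrite -!mulA -Hc !mulA Hb.
Qed.

Lemma cxl_snoc a L : cxl a L.+1 = cxl a L * tt (a + L).
Proof.
elim: L a => [|L IH] a; first by rewrite /= addn0 mul1g mulg1.
have -> : cxl a L.+2 = tt a * cxl a.+1 L.+1 by [].
by rewrite IH mulA addSnnS.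
Qed.

Fixpoint tprod c x K := if K is K'.+1 then tprod c x K' * (gpow c K' * x * inv (gpow c K')) else one.

Lemma tprod_eq c x K : tprod c x K = gpow (x * c) K * inv (gpow c K).
Proof.
elim: K => [|K IH]; first by rewrite /gpow /= inv1 mulg1.
have -> : tprod c x K.+1 = tprod c x K * (gpow c K * x * inv (gpow c K)) by [].
rewrite IH !gpowSr invM.
by rewrite -!mulA (mulA (inv (gpow c K))) mulVg mul1g !mulA mulgK.
Qed.

Lemma cxl_pow L a : gpow (cxl a L) L.+1 = one.
Proof.
elim: L a => [|L IH] a; first by rewrite /gpow /= !mulg1.
have Hta : tt a * cxl a L.+1 = cxl a.+1 L.
  have -> : cxl a L.+1 = tt a * cxl a.+1 L by [].
  by rewrite mulA tt_inv mul1g.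
have Hs : forall i, a <= i < a + L -> cxl a L.+1 * tt i = tt i.+1 * cxl a L.+1.
  by move=> i Hi; rewrite cxl_shift.
have [c Ec] : exists c, c = cxl a L.+1 by eauto.
rewrite -Ec in Hta Hs.
have E : forall C P Q : G, C * P * Q * (inv P * inv C) = C * (P * Q * inv P) * inv C.
  by move=> C P Q; rewrite !mulA.
have Hconj : forall k, k <= L -> gpow c k * tt a * inv (gpow c k) = tt (a + k).
  elim=> [|k IHk] Hk; first by rewrite /gpow /= inv1 mul1g mulg1 addn0.
  rewrite gpowS invM (E c (gpow c k) (tt a)) IHk; last exact: ltnW.
  rewrite Hs; last by rewrite leq_addr /= ltn_add2l.
  by rewrite mulgK addnS.
have Htp : forall K, K <= L.+1 -> tprod c (tt a) K = cxl a K.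
  elim=> [|K IHK] HK; first by [].
  have -> : tprod c (tt a) K.+1 = tprod c (tt a) K * (gpow c K * tt a * inv (gpow c K)) by [].
  rewrite IHK; last exact: ltnW.
  by rewrite Hconj // cxl_snoc.
have E1 : c = gpow (tt a * c) L.+1 * inv (gpow c L.+1).
  by rewrite -tprod_eq Htp // Ec.
have E2 : gpow c L.+2 = gpow (tt a * c) L.+1.
  by rewrite gpowS {1}E1 mulgKV.
by rewrite -Ec E2 Hta IH.
Qed.

End Grp.

Transparent tt.

Definition strm := nat -> bool.
Definition cns (b : bool) (p : strm) : strm := fun i => if i is j.+1 then p j else b.
Definition tl (p : strm) : strm := fun i => p i.+1.

Lemma cns_eta p : cns (p 0) (tl p) = p.
Proof. by apply: functional_extensionality => -[|i]. Qed.

Definition x0 (p : strm) : strm :=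
  if p 0 then (if p 1 then cns true (tl (tl p)) else cns false (cns true (tl (tl p))))
  else cns false (cns false (tl p)).
Definition x0i (p : strm) : strm :=
  if p 0 then cns true (cns true (tl p))
  else if p 1 then cns true (cns false (tl (tl p))) else cns false (tl (tl p)).
Definition x1 (p : strm) : strm := if p 0 then cns true (x0 (tl p)) else p.
Definition x1i (p : strm) : strm := if p 0 then cns true (x0i (tl p)) else p.
Definition sw (p : strm) : strm :=
  if p 0 then (if p 1 then (if p 2 then p else cns true (cns false (tl (tl (tl p)))))
               else cns true (cns true (cns false (tl (tl p)))))
  else p.

Lemma dec1 p : p = cns (p 0) (tl p). Proof. by rewrite cns_eta. Qed.

Ltac decomp p k :=
  match k with
  | O => idtac
  | S ?k' => rewrite (dec1 p); let b := fresh "b" in let q := fresh "q" in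
             move: (p 0) (tl p) => b q; decomp q k'
  end.

Definition ym p := x0i (x1 p).
Definition zm p := x0i (x0i (x1 (x0 (x0 p)))).
Definition tm j := fun p => iter j x0i (sw (iter j x0 p)).

Lemma S1 p : ym (zm p) = zm (ym p).
Proof.
decomp p 8.
by repeat match goal with b : bool |- _ => destruct b end.
Qed.

Ltac bruteforce p k := decomp p k; by repeat match goal with b : bool |- _ => destruct b end.

Lemma x0K p : x0i (x0 p) = p. Proof. bruteforce p 3. Qed.
Lemma x0iK p : x0 (x0i p) = p. Proof. bruteforce p 3. Qed.
Lemma x1K p : x1i (x1 p) = p. Proof. bruteforce p 4. Qed.
Lemma x1iK p : x1 (x1i p) = p. Proof. bruteforce p 4. Qed.
Lemma swK p : sw (sw p) = p. Proof. bruteforce p 4. Qed.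

Lemma S2 p : ym (tm 2 p) = tm 2 (ym p). Proof. bruteforce p 9. Qed.
Lemma S3 p : ym (tm 3 p) = tm 3 (ym p). Proof. bruteforce p 10. Qed.
Lemma S4 p : sw (zm p) = zm (sw p). Proof. bruteforce p 9. Qed.
Lemma S5 p : sw (tm 2 p) = tm 2 (sw p). Proof. bruteforce p 9. Qed.
Lemma S6 p : sw (tm 3 p) = tm 3 (sw p). Proof. bruteforce p 10. Qed.
Lemma S7 p : iter 3 (fun q => sw (tm 1 q)) p = p. Proof. bruteforce p 8. Qed.

Definition pt (k : nat) : strm := fun i => i < k.

Lemma ptS k : pt k.+1 = cns true (pt k).
Proof. by apply: functional_extensionality => -[|i]. Qed.
Lemma pt0 : pt 0 = cns false (pt 0).
Proof. by apply: functional_extensionality => -[|i]. Qed.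

Lemma x0_pt k : x0 (pt k.+2) = pt k.+1.
Proof. by rewrite !ptS. Qed.
Lemma x0i_pt k : x0i (pt k.+1) = pt k.+2.
Proof. by rewrite !ptS. Qed.

Lemma iter_x0_pt j i : iter j x0 (pt (i.+1 + j)) = pt i.+1.
Proof.
elim: j i => [|j IH] i; first by rewrite addn0.
by rewrite iterSr addnS addSn x0_pt -addSn IH.
Qed.

Lemma iter_x0i_pt j i : iter j x0i (pt i.+1) = pt (i.+1 + j).
Proof.
elim: j i => [|j IH] i; first by rewrite addn0.
by rewrite iterSr x0i_pt IH addSnnS.
Qed.

Lemma iter_x0K j p : iter j x0i (iter j x0 p) = p.
Proof.
elim: j p => [|j IH] p //.
by rewrite iterSr iterS x0K IH.
Qed.

Lemma x0_bit0 p : p 0 = false -> (x0 p) 0 = false.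
Proof. by rewrite /x0 => ->. Qed.

Lemma sw_bit0 p : p 0 = false -> sw p = p.
Proof. by rewrite /sw => ->. Qed.

Lemma iter_x0_bit0 k p : p 0 = false -> (iter k x0 p) 0 = false.
Proof. by move=> H; elim: k => [|k IH] //; rewrite iterS x0_bit0. Qed.

Lemma tm_low j i : 0 < i <= j -> tm j (pt i) = pt i.
Proof.
case: i => [|i] // /andP [_ Hij].
have Hz : (iter j x0 (pt i.+1)) 0 = false.
  have -> : j = (j - i.+1).+1 + i by lia.
  rewrite iterD -add1n (iter_x0_pt i 0) iterSr.
  by apply: iter_x0_bit0.
by rewrite /tm sw_bit0 // iter_x0K.
Qed.

Lemma sw_pt1 : sw (pt 1) = pt 2.
Proof. by apply: functional_extensionality => -[|[|[|i]]]. Qed.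
Lemma sw_pt2 : sw (pt 2) = pt 1.
Proof. by apply: functional_extensionality => -[|[|[|i]]]. Qed.
Lemma sw_pt3 k : sw (pt k.+3) = pt k.+3.
Proof. by []. Qed.

Lemma tm_a1 a : tm a (pt a.+1) = pt a.+2.
Proof.
by rewrite /tm -add1n (iter_x0_pt a 0) sw_pt1 (iter_x0i_pt a 1).
Qed.
Lemma tm_a2 a : tm a (pt a.+2) = pt a.+1.
Proof.
by rewrite /tm -addn2 addnC (iter_x0_pt a 1) sw_pt2 (iter_x0i_pt a 0) add1n.
Qed.
Lemma tm_a3 a k : tm a (pt (a + k.+3)) = pt (a + k.+3).
Proof.
by rewrite /tm addnC (iter_x0_pt a k.+2) sw_pt3 (iter_x0i_pt a k.+2).
Qed.

Fixpoint cxm a L := if L is L'.+1 then (fun p => tm a (cxm a.+1 L' p)) else id.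

Lemma cxm_low a L i : 0 < i <= a -> cxm a L (pt i) = pt i.
Proof.
elim: L a => [|L IH] a Hi //=.
rewrite IH; last by case/andP: Hi => -> /= /leqW.
by rewrite tm_low.
Qed.

Lemma cxm_mid a L i : a < i <= a + L -> cxm a L (pt i) = pt i.+1.
Proof.
elim: L a => [|L IH] a /andP [H1 H2] /=.
  by rewrite addn0 in H2; move: (leq_trans H1 H2); rewrite ltnn.
have [Heq|Hgt] : i = a.+1 \/ a.+1 < i by lia.
  subst i. by rewrite cxm_low ?tm_a1 //= leqnn.
rewrite IH; last by rewrite Hgt /= addSnnS.
have -> : i.+1 = a + (i.+1 - a - 3).+3 by lia.
by rewrite tm_a3.
Qed.

Definition Y := (strm * Z * Z)%type.

Definition alpha (y : Y) : Y := let '(x, e, l) := y in (x, e, (l + 1)%Z).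
Definition alphai (y : Y) : Y := let '(x, e, l) := y in (x, e, (l - 1)%Z).

Definition fL (k : Z) (x : strm) (e : Z) : strm * Z :=
  if (k =? 0)%Z then (x, (e + 1)%Z)
  else if (k =? 1)%Z then ((if (1 <=? e)%Z then x0i x else x), e)
  else if (k =? 3)%Z then ((if (1 <=? e)%Z then x1i x else x), e)
  else if (k =? 7)%Z then ((if (1 <=? e)%Z then sw x else x), e)
  else (x, e).
Definition fLi (k : Z) (x : strm) (e : Z) : strm * Z :=
  if (k =? 0)%Z then (x, (e - 1)%Z)
  else if (k =? 1)%Z then ((if (1 <=? e)%Z then x0 x else x), e)
  else if (k =? 3)%Z then ((if (1 <=? e)%Z then x1 x else x), e)
  else if (k =? 7)%Z then ((if (1 <=? e)%Z then sw x else x), e)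
  else (x, e).

Definition beta (y : Y) : Y := let '(x, e, l) := y in let '(x', e') := fL l x e in (x', e', l).
Definition betai (y : Y) : Y := let '(x, e, l) := y in let '(x', e') := fLi l x e in (x', e', l).

Lemma fLK k x e : fLi k (fL k x e).1 (fL k x e).2 = (x, e).
Proof.
rewrite /fL /fLi.
case: (Z.eqb_spec k 0) => [_|_] /=; first by rewrite Z.add_simpl_r.
case: (Z.eqb_spec k 1) => [_|_] /=; first by case: (Z.leb_spec 1 e) => _; rewrite ?x0iK.
case: (Z.eqb_spec k 3) => [_|_] /=; first by case: (Z.leb_spec 1 e) => _; rewrite ?x1iK.
case: (Z.eqb_spec k 7) => [_|_] //=; first by case: (Z.leb_spec 1 e) => _; rewrite ?swK.
Qed.

Lemma fLiK k x e : fL k (fLi k x e).1 (fLi k x e).2 = (x, e).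
Proof.
rewrite /fL /fLi.
case: (Z.eqb_spec k 0) => [_|_] /=; first by rewrite Z.sub_add.
case: (Z.eqb_spec k 1) => [_|_] /=; first by case: (Z.leb_spec 1 e) => _; rewrite ?x0K.
case: (Z.eqb_spec k 3) => [_|_] /=; first by case: (Z.leb_spec 1 e) => _; rewrite ?x1K.
case: (Z.eqb_spec k 7) => [_|_] //=; first by case: (Z.leb_spec 1 e) => _; rewrite ?swK.
Qed.

Lemma betaK y : betai (beta y) = y.
Proof.
case: y => [[x e] l] /=.
have := fLK l x e.
by case: (fL l x e) => x' e' /= ->.
Qed.

Lemma betaiK y : beta (betai y) = y.
Proof.
case: y => [[x e] l] /=.
have := fLiK l x e.
by case: (fLi l x e) => x' e' /= ->.
Qed.

Lemma alphaK y : alphai (alpha y) = y.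
Proof. by case: y => [[x e] l] /=; rewrite Z.add_simpl_r. Qed.
Lemma alphaiK y : alpha (alphai y) = y.
Proof. by case: y => [[x e] l] /=; rewrite Z.sub_add. Qed.

Lemma fL_triv k x e : ~ (k = 0 \/ k = 1 \/ k = 3 \/ k = 7)%Z -> fL k x e = (x, e) /\ fLi k x e = (x, e).
Proof.
move=> H; rewrite /fL /fLi.
case: (Z.eqb_spec k 0) => [?|_]; first by subst; tauto.
case: (Z.eqb_spec k 1) => [?|_]; first by subst; tauto.
case: (Z.eqb_spec k 3) => [?|_]; first by subst; tauto.
case: (Z.eqb_spec k 7) => [?|_]; first by subst; tauto.
by [].
Qed.

Section Act.
Variable n : nat.
Variables i0 i1 : 'I_n.
Hypothesis Hi01 : i0 != i1.
Implicit Types (x : letter n) (u v w : word n).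

Definition lact x (y : Y) : Y :=
  if x.1 == i0 then (if x.2 then alphai y else alpha y)
  else if x.1 == i1 then (if x.2 then betai y else beta y)
  else y.

Definition act w (y : Y) : Y := foldr lact y w.

Lemma act_cat u v y : act (u ++ v) y = act u (act v y).
Proof. by rewrite /act foldr_cat. Qed.

Lemma lactK x y : lact (linv x) (lact x y) = y.
Proof.
case: x => i b; rewrite /lact /linv /=.
case: (i == i0); first by case: b => /=; rewrite ?alphaK ?alphaiK.
case: (i == i1) => //; by case: b => /=; rewrite ?betaK ?betaiK.
Qed.

Lemma lactKV x y : lact x (lact (linv x) y) = y.
Proof. by rewrite -{1}(linvK x) lactK. Qed.

Lemma act_push x w y : act (push x w) y = act (x :: w) y.
Proof.
case: w => [|z w] //=.
case: ifP => [/eqP -> | _] //=.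
by rewrite lactKV.
Qed.

Lemma act_reduce w y : act (reduce w) y = act w y.
Proof.
elim: w y => [|x w IH] y //=.
rewrite /reduce /= -/(reduce w) act_push /=.
by rewrite IH.
Qed.

Lemma act_inv_l w y : act (fg_inv w) (act w y) = y.
Proof.
elim: w y => [|x w IH] y //=.
by rewrite fg_inv_cons act_cat /= lactK IH.
Qed.

Lemma act_inv_r w y : act w (act (fg_inv w) y) = y.
Proof. by rewrite -{1}(fg_invK w) act_inv_l. Qed.

Lemma invariant (S : seq (FF n)) :
  (forall s, s \in S -> forall y, act s.1 y = act s.2 y) ->
  forall g, gen_sub S g -> forall y, act g.1 y = act g.2 y.
Proof.
move=> HS g; elim => {g} [|s Hs|g _ IH|g h _ IHg _ IHh] y //=.
- by rewrite !act_reduce HS.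
- by rewrite -{1}(act_inv_r g.2 y) -IH act_inv_l.
- by rewrite !act_reduce !act_cat IHh IHg.
Qed.

Definition la : letter n := (i0, false).
Definition lb : letter n := (i1, false).

Lemma lact_a y : lact la y = alpha y. Proof. by rewrite /lact /la /= eqxx. Qed.
Lemma lact_ai y : lact (linv la) y = alphai y. Proof. by rewrite /lact /la /= eqxx. Qed.
Lemma lact_b y : lact lb y = beta y.
Proof. by rewrite /lact /lb /= eq_sym (negbTE Hi01) eqxx. Qed.
Lemma lact_bi y : lact (linv lb) y = betai y.
Proof. by rewrite /lact /lb /= eq_sym (negbTE Hi01) eqxx. Qed.

Lemma act_nseq_a d (x : strm) (e l : Z) : act (nseq d la) (x, e, l) = (x, e, (l + Z.of_nat d)%Z).
Proof.
elim: d => [|d IH] /=; first by rewrite Z.add_0_r.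
rewrite -/(act _ _) IH lact_a /=.
by congr (_, _, _); lia.
Qed.

Lemma act_nseq_ai d (x : strm) (e l : Z) : act (nseq d (linv la)) (x, e, l) = (x, e, (l - Z.of_nat d)%Z).
Proof.
elim: d => [|d IH] /=; first by rewrite Z.sub_0_r.
rewrite -/(act _ _) IH lact_ai /=.
by congr (_, _, _); lia.
Qed.

Definition gam d : word n := nseq d (linv la) ++ [:: lb] ++ nseq d la.
Definition omg d : word n := [:: linv lb] ++ fg_inv (gam d) ++ [:: lb] ++ gam d.

Lemma fg_inv_nseq d (x : letter n) : fg_inv (nseq d x) = nseq d (linv x).
Proof. by rewrite /fg_inv map_nseq rev_nseq. Qed.

Lemma fg_inv_gam d : fg_inv (gam d) = nseq d (linv la) ++ [:: linv lb] ++ nseq d la.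
Proof. by rewrite /gam !fg_inv_cat !fg_inv_nseq linvK catA. Qed.

Lemma act_gam d (x : strm) (e l : Z) :
  act (gam d) (x, e, l) = ((fL (l + Z.of_nat d) x e).1, (fL (l + Z.of_nat d) x e).2, l).
Proof.
rewrite /gam !act_cat act_nseq_a /= lact_b /=.
case: (fL _ x e) => x' e' /=.
by rewrite act_nseq_ai Z.add_simpl_r.
Qed.

Lemma act_gami d (x : strm) (e l : Z) :
  act (fg_inv (gam d)) (x, e, l) = ((fLi (l + Z.of_nat d) x e).1, (fLi (l + Z.of_nat d) x e).2, l).
Proof.
rewrite fg_inv_gam !act_cat act_nseq_a /= lact_bi /=.
case: (fLi _ x e) => x' e' /=.
by rewrite act_nseq_ai Z.add_simpl_r.
Qed.

Opaque gam.

Definition lifts w (f : strm -> strm) :=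
  forall (x : strm) (e l : Z), act w (x, e, l) = ((if (e =? 0)%Z && (l =? 0)%Z then f x else x), e, l).

Lemma omg_lifts d (g gi : strm -> strm) :
  (Z.of_nat d = 1 \/ Z.of_nat d = 3 \/ Z.of_nat d = 7)%Z ->
  (forall (x : strm) (e : Z), fL (Z.of_nat d) x e = ((if (1 <=? e)%Z then gi x else x), e)) ->
  (forall (x : strm) (e : Z), fLi (Z.of_nat d) x e = ((if (1 <=? e)%Z then g x else x), e)) ->
  (forall x : strm, g (gi x) = x) ->
  lifts (omg d) g.
Proof.
move=> Hd HfL HfLi Hg x e l.
rewrite /omg 3!act_cat act_gam.
case: (Z.eqb_spec l 0) => [->|Hl].
  rewrite Z.add_0_l HfL /= lact_b /= act_gami /= HfLi /= lact_bi /=.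
  rewrite Z.add_simpl_r andbT.
  case: (Z.eqb_spec e 0) => [->|He] /=; first by [].
  case: (Z.leb_spec 1 e) => H1; case: (Z.leb_spec 1 (e + 1)) => H2; rewrite ?Hg //; lia.
rewrite andbF.
have [Htl|Htld] : ~ (l = 0 \/ l = 1 \/ l = 3 \/ l = 7)%Z \/ ~ (l + Z.of_nat d = 0 \/ l + Z.of_nat d = 1 \/ l + Z.of_nat d = 3 \/ l + Z.of_nat d = 7)%Z by lia.
  have [T1 T2] := fL_triv x e Htl.
  case E: (fL (l + Z.of_nat d) x e) => [x' e'] /=.
  rewrite lact_b /= (fL_triv x' e' Htl).1 /= act_gami /= lact_bi /= (fL_triv _ _ Htl).2 /=.
  by have := fLK (l + Z.of_nat d) x e; rewrite E /= => ->.
rewrite (fL_triv x e Htld).1 /= lact_b /=.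
case E: (fL l x e) => [x' e'] /=.
rewrite act_gami /= (fL_triv x' e' Htld).2 /= lact_bi /=.
by have := fLK l x e; rewrite E /= => ->.
Qed.

Lemma lifts_X0 : lifts (omg 1) x0.
Proof. apply: omg_lifts; [lia | by [] | by [] | exact: x0iK]. Qed.
Lemma lifts_X1 : lifts (omg 3) x1.
Proof. apply: omg_lifts; [lia | by [] | by [] | exact: x1iK]. Qed.
Lemma lifts_s : lifts (omg 7) sw.
Proof. apply: omg_lifts; [lia | by [] | by [] | exact: swK]. Qed.

End Act.

Section Quot.
Variable n : nat.
Variable S : seq (FF n).
Hypothesis HS_diag : forall i : 'I_n, ([:: (i, false)], [:: (i, false)]) \in S.
Implicit Types (c : letter n) (u v w : word n).

Definition NN u := in_H S (u, [::]).

Lemma NN_nil : NN [::].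
Proof. exact: gen_one. Qed.

Lemma NN_red u v : reduce u = reduce v -> NN u -> NN v.
Proof. by rewrite /NN /in_H /ff_red /= => ->. Qed.

Lemma NN_cat u v : NN u -> NN v -> NN (u ++ v).
Proof.
rewrite /NN /in_H /ff_red /= => Hu Hv.
have := gen_mul Hu Hv.
by rewrite /ff_mul /fg_mul /= reduce_catL reduce_catR.
Qed.

Lemma NN_inv u : NN u -> NN (fg_inv u).
Proof.
rewrite /NN /in_H /ff_red /= => Hu.
have := gen_inv Hu.
by rewrite /ff_inv /= reduce_inv.
Qed.

Lemma gen_letter c : gen_sub S ([:: c], [:: c]).
Proof.
case: c => i b.
have H : gen_sub S ([:: (i, false)], [:: (i, false)]).
  have := gen_gen (HS_diag i).
  by rewrite /ff_red.
case: b => //.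
have := gen_inv H.
by rewrite /ff_inv /fg_inv /=.
Qed.

Lemma NN_conj_letter c u : NN u -> NN ([:: c] ++ u ++ [:: linv c]).
Proof.
rewrite /NN /in_H /ff_red => Hu.
have H1 := gen_mul (gen_letter c) Hu.
have H2 := gen_mul H1 (gen_letter (linv c)).
move: H2; rewrite /ff_mul /fg_mul; cbn [fst snd].
have E1 : reduce (reduce ([:: c] ++ reduce u) ++ [:: linv c])
          = reduce ([:: c] ++ u ++ [:: linv c]).
  by rewrite reduce_catL -catA -reduce_catR reduce_catL reduce_catR.
have E2 : reduce (reduce ([:: c] ++ [::]) ++ [:: linv c]) = [::].
  by rewrite reduce_catL /reduce /= eqxx.
by rewrite E1 E2.
Qed.

Lemma NN_conj w u : NN u -> NN (w ++ u ++ fg_inv w).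
Proof.
elim: w u => [|c w IH] u Hu; first by rewrite /= cats0.
rewrite fg_inv_cons.
have := NN_conj_letter c (IH u Hu).
by rewrite !catA.
Qed.

Definition eqv u v := NN (u ++ fg_inv v).

Lemma eqv_refl u : eqv u u.
Proof. by apply: (@NN_red [::]); [rewrite reduce_inv_r | exact: NN_nil]. Qed.

Lemma eqv_sym u v : eqv u v -> eqv v u.
Proof. by move=> /NN_inv; rewrite /eqv fg_inv_cat fg_invK. Qed.

Lemma red_cancel p w q : reduce (p ++ (w ++ fg_inv w) ++ q) = reduce (p ++ q).
Proof.
have E : reduce ((w ++ fg_inv w) ++ q) = reduce q.
  by rewrite -reduce_catL reduce_inv_r.
by rewrite -[LHS]reduce_catR E reduce_catR.
Qed.

Lemma red_pref (a z z' : word n) : reduce z = reduce z' -> reduce (a ++ z) = reduce (a ++ z').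
Proof. by move=> H; rewrite -reduce_catR H reduce_catR. Qed.

Lemma red_cf w q : reduce (w ++ fg_inv w ++ q) = reduce q.
Proof. by rewrite catA -reduce_catL reduce_inv_r. Qed.

Lemma red_cf' w q : reduce (fg_inv w ++ w ++ q) = reduce q.
Proof. by rewrite catA -reduce_catL reduce_inv_l. Qed.

Lemma eqv_trans u v w : eqv u v -> eqv v w -> eqv u w.
Proof.
move=> H1 H2; have := NN_cat H1 H2.
apply: NN_red.
have := red_cancel u (fg_inv v) (fg_inv w); rewrite fg_invK => <-.
by rewrite !catA.
Qed.

Lemma eqv_cat u u' v v' : eqv u u' -> eqv v v' -> eqv (u ++ v) (u' ++ v').
Proof.
move=> H1 H2.
have := NN_cat (NN_conj u H2) H1.
apply: NN_red.
rewrite /eqv fg_inv_cat -!catA.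
do 3 apply: red_pref.
by rewrite red_cf'.
Qed.

Lemma eqv_inv u u' : eqv u u' -> eqv (fg_inv u) (fg_inv u').
Proof.
move=> /eqv_sym H.
have := NN_conj (fg_inv u) H.
rewrite /eqv !fg_invK.
apply: NN_red.
rewrite -!catA; apply: red_pref.
rewrite -[u' in RHS]cats0; apply: red_pref.
by rewrite reduce_inv_l.
Qed.

Lemma eqv_class u v : eqv u v -> eqv u = eqv v.
Proof.
move=> H; apply: functional_extensionality => w.
apply: propositional_extensionality; split => H'.
  exact: eqv_trans (eqv_sym H) H'.
exact: eqv_trans H H'.
Qed.

Definition Qt := {P : word n -> Prop | exists u, P = eqv u}.
Definition qof (u : word n) : Qt := exist _ (eqv u) (ex_intro _ u erefl).

Lemma qof_eq u v : eqv u v -> qof u = qof v.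
Proof. by move=> H; apply: subset_eq_compat; apply: eqv_class. Qed.

Lemma qof_inj u v : qof u = qof v -> eqv u v.
Proof. by move=> /(congr1 (@proj1_sig _ _)) /= ->; apply: eqv_refl. Qed.

Definition rep (q : Qt) : word n :=
  proj1_sig (constructive_indefinite_description _ (proj2_sig q)).

Lemma qof_rep q : qof (rep q) = q.
Proof.
case: q => P HP; rewrite /rep /=.
case: (constructive_indefinite_description _ _) => u Hu /=.
by apply: subset_eq_compat.
Qed.

Lemma rep_qof u : eqv (rep (qof u)) u.
Proof. by apply: qof_inj; rewrite qof_rep. Qed.

Lemma qof_surj q : exists u, q = qof u.
Proof. by exists (rep q); rewrite qof_rep. Qed.

Definition qmul (p q : Qt) : Qt := qof (rep p ++ rep q).
Definition qinv (p : Qt) : Qt := qof (fg_inv (rep p)).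
Definition qone : Qt := qof [::].

Lemma qmul_qof u v : qmul (qof u) (qof v) = qof (u ++ v).
Proof. by apply: qof_eq; apply: eqv_cat; apply: rep_qof. Qed.

Lemma qinv_qof u : qinv (qof u) = qof (fg_inv u).
Proof. by apply: qof_eq; apply: eqv_inv; apply: rep_qof. Qed.

Lemma qmulA p q r : qmul p (qmul q r) = qmul (qmul p q) r.
Proof.
case: (qof_surj p) => u ->; case: (qof_surj q) => v ->; case: (qof_surj r) => w ->.
by rewrite !qmul_qof catA.
Qed.

Lemma qmul1 p : qmul p qone = p.
Proof. by case: (qof_surj p) => u ->; rewrite qmul_qof cats0. Qed.

Lemma q1mul p : qmul qone p = p.
Proof. by case: (qof_surj p) => u ->; rewrite qmul_qof. Qed.

Lemma eqv_nil u : NN u -> eqv u [::].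
Proof. by rewrite /eqv /= cats0. Qed.

Lemma qmulV p : qmul (qinv p) p = qone.
Proof.
case: (qof_surj p) => u ->; rewrite qinv_qof qmul_qof.
apply: qof_eq; apply: eqv_nil.
by apply: (@NN_red [::]); [rewrite reduce_inv_l | exact: NN_nil].
Qed.

Lemma qmulVr p : qmul p (qinv p) = qone.
Proof.
case: (qof_surj p) => u ->; rewrite qinv_qof qmul_qof.
apply: qof_eq; apply: eqv_nil.
by apply: (@NN_red [::]); [rewrite reduce_inv_r | exact: NN_nil].
Qed.

Lemma qof_one u : qof u = qone -> NN u.
Proof. by move=> /qof_inj; rewrite /eqv /= cats0. Qed.

Lemma qof_NN u : NN u -> qof u = qone.
Proof. by move=> H; apply: qof_eq; apply: eqv_nil. Qed.

End Quot.

Section Main.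
Variable n : nat.
Variables i0 i1 : 'I_n.
Hypothesis Hi01 : i0 != i1.
Implicit Types (u v w : word n).

Local Notation act := (act i0 i1).
Local Notation lifts := (lifts i0 i1).

Fixpoint wpow u k : word n := if k is k'.+1 then u ++ wpow u k' else [::].

Lemma lifts_cat u v f g : lifts u f -> lifts v g -> lifts (u ++ v) (fun x => f (g x)).
Proof.
move=> Hu Hv x e l; rewrite act_cat Hv.
by case E: ((e =? 0)%Z && (l =? 0)%Z); rewrite Hu E.
Qed.

Lemma lifts_ext u f g : lifts u f -> (forall x, f x = g x) -> lifts u g.
Proof. by move=> H E x e l; rewrite H E. Qed.

Lemma lifts_inv u f fi : lifts u f -> (forall x, f (fi x) = x) -> lifts (fg_inv u) fi.
Proof.
move=> H E x e l.
set c := ((e =? 0)%Z && (l =? 0)%Z).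
have H1 : act u ((if c then fi x else x), e, l) = (x, e, l).
  by rewrite H -/c; case: c; rewrite ?E.
by rewrite -{1}H1 act_inv_l.
Qed.

Lemma lifts_wpow u f k : lifts u f -> lifts (wpow u k) (iter k f).
Proof.
move=> H; elim: k => [|k IH] x e l /=; first by case: (_ && _).
rewrite act_cat IH.
case E: ((e =? 0)%Z && (l =? 0)%Z); by rewrite H E.
Qed.

Lemma lifts_id u f : lifts u f -> (forall x, f x = x) -> forall y, act u y = y.
Proof. by move=> H E [[x e] l]; rewrite H; case: (_ && _); rewrite ?E. Qed.

Definition W0 := locked (omg i0 i1 1).
Definition W1 := locked (omg i0 i1 3).
Definition W3 := locked (omg i0 i1 7).
Definition Wy := fg_inv W0 ++ W1.
Definition Wz := (wpow (fg_inv W0) 2 ++ W1) ++ wpow W0 2.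
Definition Wt j := (wpow (fg_inv W0) j ++ W3) ++ wpow W0 j.
Fixpoint Wc a L := if L is L'.+1 then Wt a ++ Wc a.+1 L' else [::].
Definition wcomm u v := (u ++ v) ++ fg_inv (v ++ u).

Lemma lW0 : lifts W0 x0. Proof. rewrite /W0 -lock; exact: lifts_X0. Qed.
Lemma lW1 : lifts W1 x1. Proof. rewrite /W1 -lock; exact: lifts_X1. Qed.
Lemma lW3 : lifts W3 sw. Proof. rewrite /W3 -lock; exact: lifts_s. Qed.
Lemma lW0i : lifts (fg_inv W0) x0i. Proof. apply: lifts_inv lW0 _; exact: x0iK. Qed.

Lemma lWy : lifts Wy ym.
Proof. exact: lifts_cat lW0i lW1. Qed.

Lemma lWz : lifts Wz zm.
Proof.
apply: lifts_ext.
  apply: lifts_cat; first apply: lifts_cat.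
  - exact: lifts_wpow lW0i.
  - exact: lW1.
  - exact: lifts_wpow lW0.
by [].
Qed.

Lemma lWt j : lifts (Wt j) (tm j).
Proof.
apply: lifts_ext.
  apply: lifts_cat; first apply: lifts_cat.
  - exact: lifts_wpow lW0i.
  - exact: lW3.
  - exact: lifts_wpow lW0.
by [].
Qed.

Lemma lWc a L : lifts (Wc a L) (cxm a L).
Proof.
elim: L a => [|L IH] a /=; first by move=> x e l /=; case: (_ && _).
exact: lifts_cat (lWt a) (IH a.+1).
Qed.

Lemma wcomm_triv u v f g : lifts u f -> lifts v g -> (forall x, f (g x) = g (f x)) ->
  forall y, act (wcomm u v) y = y.
Proof.
move=> Hu Hv E y.
rewrite /wcomm act_cat.
have -> : forall y', act (u ++ v) y' = act (v ++ u) y'.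
  move=> [[x e] l].
  rewrite (lifts_cat Hu Hv) (lifts_cat Hv Hu).
  by case: (_ && _); rewrite ?E.
by rewrite act_inv_r.
Qed.

Definition rels : seq (word n) :=
  [:: wcomm Wy Wz; wcomm Wy (Wt 2); wcomm Wy (Wt 3); wcomm W3 Wz;
      wcomm W3 (Wt 2); wcomm W3 (Wt 3); wpow (W3 ++ Wt 1) 3; W3 ++ W3].

Lemma rels_triv r : r \in rels -> forall y, act r y = y.
Proof.
rewrite !inE.
case/orP => [/eqP -> | ]; first by apply: wcomm_triv lWy lWz _; exact: S1.
case/orP => [/eqP -> | ]; first by apply: wcomm_triv lWy (lWt 2) _; exact: S2.
case/orP => [/eqP -> | ]; first by apply: wcomm_triv lWy (lWt 3) _; exact: S3.
case/orP => [/eqP -> | ]; first by apply: wcomm_triv lW3 lWz _; exact: S4.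
case/orP => [/eqP -> | ]; first by apply: wcomm_triv lW3 (lWt 2) _; exact: S5.
case/orP => [/eqP -> | ]; first by apply: wcomm_triv lW3 (lWt 3) _; exact: S6.
case/orP => [/eqP -> | /eqP ->].
  by apply: (lifts_id (lifts_wpow 3 (lifts_cat lW3 (lWt 1)))); exact: S7.
by apply: (lifts_id (lifts_cat lW3 lW3)); exact: swK.
Qed.

Definition SS : seq (FF n) :=
  [seq ([:: (i, false)], [:: (i, false)]) | i <- enum 'I_n] ++ [seq (r, [::]) | r <- rels].

Lemma HSd i : ([:: (i, false)], [:: (i, false)]) \in SS.
Proof. by rewrite mem_cat map_f ?mem_enum. Qed.

Lemma SS_inv s : s \in SS -> forall y, act s.1 y = act s.2 y.
Proof.
rewrite mem_cat => /orP [/mapP [i _ ->] | /mapP [r Hr ->]] y //=.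
exact: rels_triv.
Qed.

Lemma NN_rel r : r \in rels -> NN SS r.
Proof. move=> Hr; apply: gen_gen; by rewrite mem_cat orbC map_f. Qed.

Local Notation q := (qof SS).
Local Notation QG := (Qt SS).
Local Notation qm := (@qmul n SS).
Local Notation qi := (@qinv n SS).
Local Notation q1 := (qone SS).

Lemma q_cat u v : q (u ++ v) = qm (q u) (q v).
Proof. by rewrite qmul_qof //; apply: HSd. Qed.
Lemma q_inv u : q (fg_inv u) = qi (q u).
Proof. by rewrite qinv_qof //; apply: HSd. Qed.
Lemma q_wpow u k : q (wpow u k) = gpow qm q1 (q u) k.
Proof. by elim: k => [|k IH] //=; rewrite q_cat IH. Qed.

Lemma q_tt j : tt qm qi q1 (q W0) (q W3) j = q (Wt j).
Proof. by rewrite /tt /Wt !q_cat !q_wpow q_inv. Qed.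
Lemma q_yy : yy qm qi (q W0) (q W1) = q Wy.
Proof. by rewrite /yy /Wy q_cat q_inv. Qed.
Lemma q_zz : zz qm qi q1 (q W0) (q W1) = q Wz.
Proof. by rewrite /zz /Wz -q_inv -!q_wpow -!q_cat. Qed.
Lemma q_cxl a L : cxl qm qi q1 (q W0) (q W3) a L = q (Wc a L).
Proof. by elim: L a => [|L IH] a //=; rewrite q_cat IH q_tt. Qed.

Lemma q_comm u v : wcomm u v \in rels -> commute qm (q u) (q v).
Proof.
move=> H; rewrite /commute -!q_cat.
apply: qof_eq; exact: NN_rel.
Qed.

Lemma NN_cpow L : NN SS (wpow (Wc 0 L) L.+1).
Proof.
apply: qof_one.
rewrite q_wpow -q_cxl.
apply: (@cxl_pow _ _ _ _ _ _ _ _ _ (q W0) (q W1) (q W3)).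
- exact: qmulA HSd.
- exact: q1mul HSd.
- exact: qmul1 HSd.
- exact: qmulV HSd.
- exact: qmulVr HSd.
- by rewrite q_yy q_zz; apply: q_comm; rewrite !inE eqxx.
- by rewrite q_yy q_tt; apply: q_comm; rewrite !inE eqxx orbT.
- by rewrite q_yy q_tt; apply: q_comm; rewrite !inE eqxx !orbT.
- by rewrite q_zz; apply: q_comm; rewrite !inE eqxx !orbT.
- by rewrite q_tt; apply: q_comm; rewrite !inE eqxx !orbT.
- by rewrite q_tt; apply: q_comm; rewrite !inE eqxx !orbT.
- rewrite q_tt -q_cat -q_wpow; apply: qof_NN; apply: NN_rel; by rewrite !inE eqxx !orbT.
- rewrite -q_cat; apply: qof_NN; apply: NN_rel; by rewrite !inE eqxx !orbT.
Qed.

Lemma ff_pow_eq (C : word n) k : ff_pow (C, [::]) k = (reduce (wpow C k), [::]).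
Proof.
elim: k => [|k IH] //=.
by rewrite IH /ff_mul /fg_mul /= reduce_catR.
Qed.

Lemma inH_pow (C : word n) k : in_H SS (ff_pow (C, [::]) k) <-> NN SS (wpow C k).
Proof.
rewrite ff_pow_eq /in_H /NN /ff_red /= reduce_idem.
by [].
Qed.

Lemma inH_act (C : word n) k : in_H SS (ff_pow (C, [::]) k) -> forall y, act (wpow C k) y = y.
Proof.
move=> H y.
have := invariant SS_inv H y.
by rewrite ff_pow_eq /ff_red /= !act_reduce.
Qed.

Lemma Ord_all m : exists g, is_Ord SS g m.
Proof.
case: m => [|[|L]].
- exists ([:: la i0], [::]); right; split => // k Hk /inH_act /(_ (pt 0, 0%Z, 0%Z)).
  have E : forall j, act (wpow [:: la i0] j) (pt 0, 0%Z, 0%Z) = (pt 0, 0%Z, Z.of_nat j).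
    elim=> [|j IH] //=.
    rewrite -/(act _ _) IH lact_a /=.
    by congr (_, _, _); lia.
  rewrite E => -[].
  by case: k Hk.
- exists (ff_one n); left; split => //; split => [|k]; last by case: k => [|[|]].
  exact: gen_one.
- exists (Wc 0 L.+1, [::]); left; split => //; split.
    by apply/inH_pow; apply: NN_cpow.
  move=> k /andP [Hk0 HkL] /inH_act /(_ (pt 1, 0%Z, 0%Z)).
  rewrite (lifts_wpow k (lWc 0 L.+1)).
  have -> : ((0 =? 0)%Z && (0 =? 0)%Z) = true by [].
  have E : forall j, j <= L.+1 -> iter j (cxm 0 L.+1) (pt 1) = pt j.+1.
    elim=> [|j IH] Hj; first by [].
    rewrite iterS IH; last exact: ltnW.
    by rewrite cxm_mid.
  rewrite E; last by rewrite -ltnS.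
  move=> [] /(congr1 (fun p => p 1)).
  by case: k Hk0 {HkL E}.
Qed.

End Main.

Theorem main_result (n : nat) (hn : 2 <= n) :
  (exists S : seq (FF n), Ord_spectrum_full S)
  /\ ~ bounded_subgroup_spectra_FF n.
Proof.
have H0 : 0 < n by apply: leq_trans hn.
set i0 : 'I_n := Ordinal H0.
set i1 : 'I_n := Ordinal hn.
have Hi : i0 != i1 by [].
have Hfull : Ord_spectrum_full (SS i0 i1).
  move=> m; exact: Ord_all Hi m.
split; first by exists (SS i0 i1).
move=> /(_ (SS i0 i1)) [B HB].
have [g Hg] := Hfull B.+1.
by have := HB g B.+1 Hg; rewrite ltnn.
Qed.


Theorem proposition5p3 (n : nat) (hn : 2 <= n) :
  (exists S : seq (FF n), Ord_spectrum_full S)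
  /\ ~ bounded_subgroup_spectra_FF n.
Proof. exact: main_result. Qed.
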